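(* Let $b$ be an integer with $2\le b\le 10$. All solutions of $$P_n=b^{d}P_m+Q_k$$ in integers $n,k\ge 0$ and $m\ge 1$, where $d$ is the number of digits of $Q_k$ in base $b$, are given by the following representations (in particular $P_n\in\{5,12,70\}$): $$5=P_3=3^1P_1+Q_0=3^1P_1+Q_1,$$ $$12=P_4=5^1P_2+Q_0=5^1P_2+Q_1,$$ $$12=P_4=10^1P_1+Q_0=10^1P_1+Q_1,$$ $$70=P_6=6^2P_1+Q_4.$$
   Context: $(P_n)_{n\ge0}$ is the Pell sequence: $P_0=0$, $P_1=1$, $P_n=2P_{n-1}+P_{n-2}$ for $n\ge2$. $(Q_n)_{n\ge0}$ is the Pell–Lucas sequence: $Q_0=2$, $Q_1=2$, $Q_n=2Q_{n-1}+Q_{n-2}$ for $n\ge2$. For a positive integer $N$, the number of digits of $N$ in base $b$ is $\lfloor \log_b N\rfloor+1$. (For $m=0$ the equation reduces to $P_n=Q_k$, whose only solutions are $P_2=Q_0=Q_1$; these are excluded by the hypothesis $m\ge1$.) *)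

(* Defs.v *)
From mathcomp Require Import all_boot.
Set Implicit Arguments. Unset Strict Implicit. Unset Printing Implicit Defensive.

Fixpoint pell (n : nat) : nat :=
  match n with
  | 0 => 0
  | 1 => 1
  | (n'.+1 as m).+1 => 2 * pell m + pell n'
  end.

Fixpoint pell_lucas (n : nat) : nat :=
  match n with
  | 0 => 2
  | 1 => 2
  | (n'.+1 as m).+1 => 2 * pell_lucas m + pell_lucas n'
  end.

(* Number of base-b digits of a positive integer N: floor(log_b N) + 1.
   trunc_log b N is the largest e with b^e <= N (for b >= 2, N >= 1). *)
Definition ndigits (b N : nat) : nat := (trunc_log b N).+1.

(* Main.v *)
Require Import Defs.
From Stdlib Require Import NArith ZArith Lia.
From mathcomp Require Import all_boot zify.
Set Implicit Arguments. Unset Strict Implicit.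


Definition rec (u : nat -> nat) := forall n, u n.+2 = 2 * u n.+1 + u n.
Lemma rec_P : rec pell. Proof. by []. Qed.
Lemma rec_Q : rec pell_lucas. Proof. by []. Qed.

Lemma pshift u : rec u -> forall a k, u (a.+1 + k) = pell a.+1 * u k.+1 + pell a * u k.
Proof.
move=> hu; elim=> [|a IH] k; first by rewrite /= add1n; lia.
have -> : a.+2 + k = a.+1 + k.+1 by lia.
rewrite IH hu (rec_P a); nia.
Qed.

Lemma QP k : pell_lucas k + 2 * pell k = 2 * pell k.+1.
Proof. elim: k {-2}k (leqnn k) => [|n IH] [|[|k]] // hk.
rewrite rec_Q rec_P (rec_P k.+1).
have := IH k.+1 ltac:(lia); have := IH k ltac:(lia); lia.
Qed.

Lemma P_mono2 k : 2 * pell k <= pell k.+1.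
Proof. case: k => [|k] //; rewrite rec_P; lia. Qed.

Lemma P_up k : 0 < k -> 2 * pell k.+1 <= 5 * pell k.
Proof. case: k => [|k] // _; rewrite rec_P; have := P_mono2 k; lia. Qed.

Lemma P_mono i i' : i <= i' -> pell i <= pell i'.
Proof. move=> /subnK <-; elim: (i' - i) => [|d IH] //; rewrite addSn; have := P_mono2 (d + i); lia. Qed.

Lemma P_pos i : 0 < i -> 0 < pell i.
Proof. move=> hi; have := P_mono hi; done. Qed.

Lemma P_smono i : 0 < i -> pell i < pell i.+1.
Proof. move=> hi; have := P_pos hi; have := P_mono2 i; lia. Qed.

Lemma Q_mono k k' : k <= k' -> pell_lucas k <= pell_lucas k'.
Proof. move=> /subnK <-; elim: (k' - k) => [|d IH] //; rewrite addSn.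
have := QP (d+k); have := QP (d+k).+1; have := P_mono2 (d + k).+1; have := P_mono2 (d+k); lia. Qed.

Lemma addPQ m k : 2 * pell (m + k) = pell m * pell_lucas k + pell k * pell_lucas m.
Proof.
suff: 2 * pell (m + k) = pell m * pell_lucas k + pell k * pell_lucas m /\
      2 * pell (m + k.+1) = pell m * pell_lucas k.+1 + pell k.+1 * pell_lucas m by case.
elim: k => [|k [IH1 IH2]].
  rewrite addn0 addn1; have := QP m; have -> : pell 0 = 0 by []; have -> : pell 1 = 1 by []; have -> : pell_lucas 0 = 2 by []; have -> : pell_lucas 1 = 2 by []; lia.
split=> //.
have -> : m + k.+2 = (m + k).+2 by lia.
rewrite rec_P rec_Q rec_P.
move: IH1 IH2; have -> : m + k.+1 = (m + k).+1 by lia. move=> IH1 IH2. nia.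
Qed.

Lemma Q_pos k : 0 < pell_lucas k.
Proof. by apply: leq_trans (Q_mono (leq0n k)). Qed.

Lemma partI m k n x : 0 < m -> pell_lucas k < x -> x <= 10 * pell_lucas k ->
  pell n = x * pell m + pell_lucas k -> m + k <= n <= m + k + 4.
Proof.
move=> hm hx1 hx2 he.
have hPm := P_pos hm.
have hQk := Q_pos k.
have hA := addPQ m k.
have hQm : pell_lucas m <= 3 * pell m.
  have := QP m; have := P_up hm; lia.
have hQk2 : 2 * pell k <= pell_lucas k.
  have := QP k; have := P_mono2 k; lia.
have h1 : pell k * pell_lucas m <= pell k * (3 * pell m) by apply: leq_mul.
have h2 : (2 * pell k) * (3 * pell m) <= pell_lucas k * (3 * pell m) by apply: leq_mul.
have h4 : 4 * pell (m + k) <= 5 * (pell m * pell_lucas k) by nia.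
have h5 : pell m * pell_lucas k <= 2 * pell (m+k) by lia.
apply/andP; split.
  rewrite leqNgt; apply/negP => hn.
  have h6 : pell n <= pell (m + k).-1 by apply: P_mono; lia.
  have h7 : 2 * pell (m+k).-1 <= pell (m+k).
    by have := P_mono2 (m+k).-1; rewrite prednK //; lia.
  have h8 : (pell_lucas k).+1 * pell m <= x * pell m by apply: leq_mul.
  nia.
rewrite leqNgt; apply/negP => hn.
have h6 : pell (m + k + 5) <= pell n by apply: P_mono; lia.
have e5 : forall i, 32 * pell i <= pell (i + 5).
  move=> i; have := P_mono2 i; have := P_mono2 i.+1; have := P_mono2 i.+2;
  have := P_mono2 i.+3; have := P_mono2 i.+4; rewrite (_ : i + 5 = i.+4.+1); [lia|lia].
have := e5 (m + k).
have h8 : x * pell m <= (10 * pell_lucas k) * pell m by apply: leq_mul.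
nia.
Qed.


Definition zP n := Z.of_nat (pell n).
Definition zQ n := Z.of_nat (pell_lucas n).
Definition sg (n : nat) : Z := if odd n then (-1)%Z else 1%Z.

Lemma sgS n : sg n.+1 = (- sg n)%Z.
Proof. rewrite /sg /=; by case: (odd n). Qed.
Lemma sg2 n : (sg n * sg n = 1)%Z.
Proof. rewrite /sg; by case: (odd n). Qed.

Lemma zshift u : rec u -> forall a k,
  Z.of_nat (u (a.+1 + k)) = (zP a.+1 * Z.of_nat (u k.+1) + zP a * Z.of_nat (u k))%Z.
Proof. move=> hu a k; rewrite (pshift hu) /zP; lia. Qed.

Lemma cassini a : (zP a.+2 * zP a - zP a.+1 * zP a.+1 = sg a.+1)%Z.
Proof.
elim: a => [|a IH]; first by rewrite /zP /sg /=.
rewrite sgS -IH /zP (rec_P a.+1) (rec_P a); lia.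
Qed.

Lemma cassc a : (zP a * zP a = sg a.+1 + zP a.+1 * (zP a.+1 - 2 * zP a))%Z.
Proof. have := cassini a; rewrite /zP (rec_P a); lia. Qed.

Lemma docagne i t : (zP (i + t) * zP i.+1 + sg i.+1 * zP t = zP (i.+1 + t) * zP i)%Z.
Proof.
case: i => [|i].
  rewrite /zP /sg add0n add1n; change (pell 1) with 1; change (pell 0) with 0;
  change (odd 1) with true; cbv iota; rewrite Z.mul_0_r Z.mul_1_r; ring.
have e1 := zshift rec_P i.+1 t.
have e2 := zshift rec_P i t.
have e3 := cassini i.
rewrite sgS -e3 /zP e1 e2 /zP; ring.
Qed.

Lemma QPP n : pell_lucas n.+1 = pell n.+2 + pell n.
Proof. have := QP n.+1; rewrite rec_P; lia. Qed.

Lemma QP3 n : pell_lucas n + 3 * pell n = pell n.+2.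
Proof. have := QP n; rewrite rec_P; lia. Qed.

Lemma Q_is_P r i : pell_lucas r = pell i -> r <= 1 /\ i = 2.
Proof.
case: r => [|[|t]] e.
- split=> //; case: i e => [|[|[|i]]] // e.
  have h : pell 3 <= pell i.+3 by apply: P_mono.
  by rewrite -e in h.
- split=> //; case: i e => [|[|[|i]]] // e.
  have h : pell 3 <= pell i.+3 by apply: P_mono.
  by rewrite -e in h.
exfalso; move: e; rewrite QPP => e.
have h1 : 0 < pell t.+1 by apply: P_pos.
have h2 : pell t.+3 + pell t.+1 < pell t.+4.
  have h3 : pell t.+1 <= pell t.+2 by apply: P_mono.
  have h4 : 0 < pell t.+3 by apply: P_pos.
  rewrite (rec_P t.+2); lia.
case: (leqP i t.+3) => hi.
  have := P_mono hi; lia.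
have := P_mono hi; lia.
Qed.

Lemma sumlt a r : 2 <= a -> 1 <= r -> pell a + pell_lucas r < pell (a + r).
Proof.
case: a => [|a] // ha; case: r => [|r] // _.
rewrite pshift // QPP.
have h1 : pell 2 <= pell a.+1 by apply: P_mono.
have h2 : pell 2 <= pell r.+2 by apply: P_mono.
have h3 : 1 <= pell a by apply: P_pos; lia.
have h4 : pell r < pell r.+1 by case: r {h2} => [|r] //; apply: P_smono.
change (pell 2) with 2 in h1; change (pell 2) with 2 in h2.
have h5 : pell r.+1 <= pell a * pell r.+1 by rewrite -{1}(mul1n (pell r.+1)); apply: leq_mul.
nia.
Qed.

Lemma dvd_lin (n x y t : Z) : (n | x)%Z -> y = (x + t * n)%Z -> (n | y)%Z.
Proof. move=> h ->; apply: Z.divide_add_r => //; apply: Z.divide_factor_r. Qed.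

Lemma dvd_unc a z : (zP a.+1 | zP a * z)%Z -> (zP a.+1 | z)%Z.
Proof.
move=> h.
have h2 : (zP a.+1 | zP a * (zP a * z))%Z by apply: Z.divide_mul_r.
apply: (dvd_lin (x := (sg a.+1 * (zP a * (zP a * z)))%Z) (t := (- sg a.+1 * (zP a.+1 - 2 * zP a) * z)%Z)).
  by apply: Z.divide_mul_r.
have E := cassc a; have S := sg2 a.+1.
rewrite (Z.mul_assoc (zP a) (zP a) z) E.
transitivity (sg a.+1 * sg a.+1 * z)%Z; [rewrite S; ring | ring].
Qed.

Lemma reduce a j k : (zP a.+1 | zP (a.+1 + (k + a.+1) + j) - zQ (k + a.+1))%Z ->
  (zP a.+1 | zP (a.+1 + k + j) - zQ k)%Z.
Proof.
move=> h; apply: dvd_unc.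
have e1 := zshift rec_P a (a.+1 + k + j).
have e2 := zshift rec_Q a k.
rewrite (_ : a.+1 + (k + a.+1) + j = a.+1 + (a.+1 + k + j)) in h; last lia.
rewrite (_ : k + a.+1 = a.+1 + k) in h; last lia.
apply: (dvd_lin h (t := (- (zP (a.+1 + k + j).+1 - zQ k.+1))%Z)).
rewrite /zP /zQ in e1 e2 h *.
rewrite e1 e2; ring.
Qed.

Lemma reduce_mod a j k : (zP a.+1 | zP (a.+1 + k + j) - zQ k)%Z ->
  (zP a.+1 | zP (a.+1 + (k %% a.+1) + j) - zQ (k %% a.+1))%Z.
Proof.
rewrite {1 2}(divn_eq k a.+1).
elim: (k %/ a.+1) => [|q IH]; first by rewrite mul0n add0n.
move=> h; apply: IH.
move: h; rewrite mulSn (_ : a.+1 + q * a.+1 + k %% a.+1 = (q * a.+1 + k %% a.+1) + a.+1); last lia.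
exact: reduce.
Qed.

Lemma L_small n w : (n | w)%Z -> (0 < n)%Z -> (- n < w < n)%Z -> w = 0%Z.
Proof. move=> [q ->] hn hw; have : q = 0%Z by nia. move=> ->; ring. Qed.

Lemma L_two n w : (n | w)%Z -> (0 < n)%Z -> (- 2 * n < w < n)%Z -> w = 0%Z \/ w = (- n)%Z.
Proof. move=> [q ->] hn hw; have : q = 0%Z \/ q = (-1)%Z by nia. case=> ->; [left|right]; ring. Qed.

Lemma L_pos n w : (n | w)%Z -> (0 < n)%Z -> (0 < w < 2 * n)%Z -> w = n.
Proof. move=> [q ->] hn hw; have : q = 1%Z by nia. move=> ->; ring. Qed.

Lemma sg_cases n : sg n = 1%Z \/ sg n = (-1)%Z.
Proof. rewrite /sg; case: (odd n); auto. Qed.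

Lemma partII i j k : 6 <= i -> j <= 4 -> (zP i.+2 | zP (i.+2 + k + j) - zQ k)%Z -> False.
Proof.
move=> hi hj /reduce_mod.
have hr : k %% i.+2 < i.+2 by apply: ltn_pmod.
move: (k %% i.+2) hr => r hr H.
have N1 := QPP i.
have N2 := QP3 i.
have N3 : pell 6 <= pell i by apply: P_mono.
change (pell 6) with 70 in N3.
have N4 : pell i <= pell i.+1 by apply: P_mono.
have N5 : pell i.+2 = 2 * pell i.+1 + pell i by [].
have hPm : (0 < zP i.+2)%Z by rewrite /zP; lia.
case: (ltnP (r + j) i.+2) => hs.
-
  have e1 := zshift rec_P i.+1 (r + j).
  have H1 : (zP i.+2 | zP i.+1 * zP (r + j) - zQ r)%Z.
    apply: (dvd_lin H (t := (- zP (r + j).+1)%Z)).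
    rewrite /zP in e1 *; rewrite (_ : i.+2 + r + j = i.+2 + (r + j)); last lia.
    rewrite e1; ring.
  move: hs H1; case Es: (r + j) => [|t] hs H1.
    have hr0 : r = 0 by lia.
    rewrite hr0 in H1.
    have := L_small H1 hPm; rewrite /zP /zQ; change (pell 0) with 0; change (pell_lucas 0) with 2.
    move=> h; have := h ltac:(lia); lia.
  set u := i.+2 - t.+1.
  have hu : t.+1 + u = i.+2 by rewrite /u; lia.
  have hdo := docagne t u.
  rewrite hu (_ : t + u = i.+1) in hdo; last lia.
  have H2 : (zP i.+2 | - sg t.+1 * zP u - zQ r)%Z.
    apply: (dvd_lin H1 (t := (- zP t)%Z)).
    have : (zP i.+1 * zP t.+1 = zP i.+2 * zP t - sg t.+1 * zP u)%Z by lia.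
    move=> ->; ring.
  have hu1 : 1 <= u by rewrite /u; lia.
  have hPu : pell u < pell i.+2.
    have : pell u <= pell i.+1 by apply: P_mono; rewrite /u; lia.
    lia.
  case: (leqP r i) => hri.
  + have hQr : pell_lucas r <= pell_lucas i by apply: Q_mono.
    have hb : (-2 * zP i.+2 < - sg t.+1 * zP u - zQ r < zP i.+2)%Z.
      case: (sg_cases t.+1) => hsg; rewrite hsg /zP /zQ; have := Q_pos r; lia.
    have [hw|hw] := L_two H2 hPm hb.
    * case: (sg_cases t.+1) => hsg; rewrite hsg in hw.
        rewrite /zP /zQ in hw; have := Q_pos r; lia.
      have e : pell_lucas r = pell u by rewrite /zP /zQ in hw; lia.
      have [hr1 hu2] := Q_is_P e.
      lia.
    * case: (sg_cases t.+1) => hsg; rewrite hsg in hw.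
        have e : pell u + pell_lucas r = pell i.+2 by rewrite /zP /zQ in hw; lia.
        case: (posnP r) => hr0.
          rewrite hr0 in e; change (pell_lucas 0) with 2 in e.
          have : pell u <= pell i.+1 by apply: P_mono; rewrite /u; lia.
          lia.
        have hle : pell u <= pell (i.+2 - r) by apply: P_mono; rewrite /u; lia.
        have := sumlt (_ : 2 <= i.+2 - r) (_ : 1 <= r).
        rewrite (_ : i.+2 - r + r = i.+2); last lia.
        move=> /(_ ltac:(lia) ltac:(lia)); lia.
      rewrite /zP /zQ in hw; lia.
  + have hr1 : r = i.+1 by lia.
    have hj0 : u = 1 by rewrite /u; lia.
    rewrite hr1 hj0 in H2.
    have H3 : (zP i.+2 | - sg t.+1 - zP i)%Z.
      apply: (dvd_lin H2 (t := 1%Z)); rewrite /zP /zQ N1; change (pell 1) with 1; lia.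
    have := L_small H3 hPm; case: (sg_cases t.+1) => hsg; rewrite hsg /zP; lia.
-
  set r' := r + j - i.+2.
  have hr' : r' <= 3 by rewrite /r'; lia.
  have e1 := zshift rec_P i.+1 (i.+2 + r').
  have e2 := zshift rec_P i.+1 r'.
  have E := cassc i.+1.
  have H1 : (zP i.+2 | sg i.+2 * zP r' - zQ r)%Z.
    apply: (dvd_lin H (t := (- zP (i.+2 + r').+1 - zP i.+1 * zP r'.+1 - (zP i.+2 - 2 * zP i.+1) * zP r')%Z)).
    rewrite (_ : i.+2 + r + j = i.+2 + (i.+2 + r')); last (rewrite /r'; lia).
    rewrite /zP in e1 e2 E *.
    rewrite e1 e2.
    have -> : (sg i.+2 = Z.of_nat (pell i.+1) * Z.of_nat (pell i.+1) - Z.of_nat (pell i.+2) * (Z.of_nat (pell i.+2) - 2 * Z.of_nat (pell i.+1)))%Z by lia.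
    ring.
  have hP5 : pell r' <= pell 3 by apply: P_mono.
  change (pell 3) with 5 in hP5.
  have hQ4 : pell_lucas 4 <= pell_lucas r by apply: Q_mono; lia.
  change (pell_lucas 4) with 34 in hQ4.
  have hQr : pell_lucas r <= pell_lucas i.+1 by apply: Q_mono; lia.
  have H2 : (zP i.+2 | - (sg i.+2 * zP r' - zQ r))%Z by apply/Z.divide_opp_r.
  have hw := L_pos H2 hPm.
  case: (sg_cases i.+2) => hsg; rewrite hsg /zP /zQ in hw.
  + have hw' := hw ltac:(lia).
    case: (leqP r i) => hri.
      have : pell_lucas r <= pell_lucas i by apply: Q_mono.
      lia.
    have hr1 : r = i.+1 by lia.
    rewrite hr1 in hw'; lia.
  + have hw' := hw ltac:(lia).
    case: (leqP r i) => hri.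
      have : pell_lucas r <= pell_lucas i by apply: Q_mono.
      lia.
    have hr1 : r = i.+1 by lia.
    rewrite hr1 in hw'; lia.
Qed.


Definition stp (M : N) (p : N*N) : N*N := (p.2, (2*p.2 + p.1) mod M)%num.

Definition eqm (M x y : N) := (x mod M = y mod M)%num.

Lemma eqm_refl M x : eqm M x x. Proof. by []. Qed.
Lemma eqm_sym M x y : eqm M x y -> eqm M y x. Proof. by rewrite /eqm => ->. Qed.
Lemma eqm_trans M x y z : eqm M x y -> eqm M y z -> eqm M x z.
Proof. by rewrite /eqm => -> ->. Qed.
Lemma eqm_add M x x' y y' : eqm M x x' -> eqm M y y' -> eqm M (x + y) (x' + y').
Proof. rewrite /eqm => hx hy; by rewrite N.Div0.add_mod hx hy -N.Div0.add_mod. Qed.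
Lemma eqm_mul M x x' y y' : eqm M x x' -> eqm M y y' -> eqm M (x * y) (x' * y').
Proof. rewrite /eqm => hx hy; by rewrite N.Div0.mul_mod hx hy -N.Div0.mul_mod. Qed.
Lemma eqm_modr M x y : eqm M x y -> eqm M x (y mod M).
Proof. by rewrite /eqm N.Div0.mod_mod. Qed.
Lemma eqm_mod M x : eqm M (x mod M) x.
Proof. by rewrite /eqm N.Div0.mod_mod. Qed.

Lemma iter_corr u M : rec u -> forall i,
  iter i (stp M) ((N.of_nat (u 0)) mod M, (N.of_nat (u 1)) mod M)%num =
  ((N.of_nat (u i)) mod M, (N.of_nat (u i.+1)) mod M)%num.
Proof.
move=> hu; elim=> [|i IH] //.
rewrite iterS IH /stp; cbn [fst snd]; congr pair.
rewrite hu.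
have -> : N.of_nat (2 * u i.+1 + u i) = (2 * N.of_nat (u i.+1) + N.of_nat (u i))%num by lia.
apply: eqm_add; [apply: eqm_mul => //; apply: eqm_mod | apply: eqm_mod].
Qed.

Lemma period u M T : rec u -> 0 < T ->
  ((N.of_nat (pell T)) mod M = 0 mod M)%num -> ((N.of_nat (pell T.-1)) mod M = 1 mod M)%num ->
  forall q r, eqm M (N.of_nat (u (q * T + r))) (N.of_nat (u r)).
Proof.
move=> hu hT h0 h1; case: T hT h0 h1 => [|a] // _ h0 h1.
elim=> [|q IH] r; first by rewrite mul0n add0n.
apply: eqm_trans (IH r).
rewrite mulSn -addnA (pshift hu).
set y1 := u (q * a.+1 + r).+1; set y0 := u (q * a.+1 + r).
have -> : N.of_nat (pell a.+1 * y1 + pell a * y0) =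
   (N.of_nat (pell a.+1) * N.of_nat y1 + N.of_nat (pell a) * N.of_nat y0)%num by lia.
apply: (eqm_trans (y := (0 * N.of_nat y1 + 1 * N.of_nat y0)%num)).
  apply: eqm_add; apply: eqm_mul => //.
by rewrite N.mul_0_l N.add_0_l N.mul_1_l.
Qed.

Fixpoint pl (b M : N) (n : nat) (x : N) : seq N :=
  match n with 0 => [::] | n'.+1 => x :: pl b M n' ((x * b) mod M)%num end.

Lemma pl_mem b M n x i : i < n -> ((x * b ^ N.of_nat i) mod M)%num \in pl b M n (x mod M)%num.
Proof.
elim: n i x => [|n IH] [|i] x //= hi.
  by rewrite N.mul_1_r inE eqxx.
rewrite inE; apply/orP; right.
have -> : ((x * b ^ N.of_nat i.+1) mod M = ((x * b) * b ^ N.of_nat i) mod M)%num.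
  congr N.modulo; rewrite Nat2N.inj_succ N.pow_succ_r'; ring.
have -> : ((x mod M * b) mod M = (x * b) mod M)%num by apply: eqm_mul => //; apply: eqm_mod.
exact: IH.
Qed.

Lemma pow_period b M D ord : 0 < ord ->
  ((b ^ N.of_nat (D + ord)) mod M = (b ^ N.of_nat D) mod M)%num ->
  forall d, D <= d -> exists i, i < ord /\ eqm M (b ^ N.of_nat d) (b ^ N.of_nat (D + i)).
Proof.
move=> hord hp d hd.
have key : forall q i, eqm M (b ^ N.of_nat (D + q * ord + i)) (b ^ N.of_nat (D + i)).
  elim=> [|q IH] i; first by rewrite mul0n addn0.
  apply: eqm_trans (IH i).
  have -> : D + q.+1 * ord + i = (D + ord) + (q * ord + i) by rewrite mulSn; lia.
  have -> : D + q * ord + i = D + (q * ord + i) by lia.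
  rewrite (Nat2N.inj_add (D + ord)) (Nat2N.inj_add D (q * ord + i)) !N.pow_add_r.
  by apply: eqm_mul.
exists ((d - D) %% ord); split; first by rewrite ltn_mod.
have e : D + (d - D) %/ ord * ord + (d - D) %% ord = d by have := divn_eq (d - D) ord; lia.
by have := key ((d - D) %/ ord) ((d - D) %% ord); rewrite e.
Qed.

Definition stN (M a0 a1 : N) (i : nat) : N*N := iter i (stp M) ((a0 mod M)%num, (a1 mod M)%num).
Definition pellN i := (stN 0 0 1 i).1.
Definition QN i := (stN 0 2 2 i).1.

Lemma stN_P M i : stN M 0 1 i = ((N.of_nat (pell i)) mod M, (N.of_nat (pell i.+1)) mod M)%num.
Proof. exact: (iter_corr M rec_P i). Qed.
Lemma stN_Q M i : stN M 2 2 i = ((N.of_nat (pell_lucas i)) mod M, (N.of_nat (pell_lucas i.+1)) mod M)%num.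
Proof. exact: (iter_corr M rec_Q i). Qed.
Lemma pellN_ok i : pellN i = N.of_nat (pell i).
Proof. by rewrite /pellN stN_P N.mod_0_r. Qed.
Lemma QN_ok i : QN i = N.of_nat (pell_lucas i).
Proof. by rewrite /QN stN_Q N.mod_0_r. Qed.

Lemma nNexp b d : N.of_nat (b ^ d) = (N.of_nat b ^ N.of_nat d)%num.
Proof.
elim: d => [|d IH] //; rewrite expnS Nat2N.inj_mul IH Nat2N.inj_succ N.pow_succ_r' //.
Qed.

Fixpoint loop (M : N) (pw : seq N) (n : nat) (s1 s2 : N*N) : bool :=
  match n with 0 => true
  | n'.+1 => all (fun w => ~~ N.eqb s1.1 ((w + s2.1) mod M)%num) pw &&
             loop M pw n' (stp M s1) (stp M s2) end.

Lemma loop_sound M pw n s1 s2 : loop M pw n s1 s2 -> forall k, k < n -> forall w, w \in pw ->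
  (iter k (stp M) s1).1 <> ((w + (iter k (stp M) s2).1) mod M)%num.
Proof.
elim: n s1 s2 => [|n IH] s1 s2 //= /andP [h1 h2] [|k] hk w hw.
  by move: (allP h1 w hw) => /negP hn e; apply: hn; apply/N.eqb_eq.
by rewrite !iterSr; apply: IH.
Qed.

Definition cong_ok (m j b D : nat) (M : N) (T ord : nat) : bool :=
  let bN := N.of_nat b in
  [&& 0 < T, 0 < ord,
   N.eqb (stN M 0 1 T).1 (0 mod M)%num,
   N.eqb (stN M 0 1 T.-1).1 (1 mod M)%num &
   N.eqb ((bN ^ N.of_nat (D + ord)) mod M)%num ((bN ^ N.of_nat D) mod M)%num &&
   loop M (map (fun w => (w * pellN m) mod M)%num (pl bN M ord ((bN ^ N.of_nat D) mod M)%num)) T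
     (stN M 0 1 (m + j)) (stN M 2 2 0)].

Lemma cong_sound m j b D M T ord : cong_ok m j b D M T ord ->
  forall k d, D <= d -> pell (m + k + j) <> b ^ d * pell m + pell_lucas k.
Proof.
case/and5P=> hT hord /N.eqb_eq h0 /N.eqb_eq h1 /andP [/N.eqb_eq hp hl] k d hd E.
move: h0 h1; rewrite !stN_P; cbn [fst] => h0 h1.
have [i [hi hdi]] := pow_period hord hp hd.
set k0 := k %% T.
have hk0 : k0 < T by rewrite ltn_mod.
have hmem := pl_mem (N.of_nat b) M (N.of_nat b ^ N.of_nat D)%num hi.
set w := (((((N.of_nat b ^ N.of_nat D) * N.of_nat b ^ N.of_nat i) mod M) * pellN m) mod M)%num.
have hw : w \in map (fun w => (w * pellN m) mod M)%num (pl (N.of_nat b) M ord ((N.of_nat b ^ N.of_nat D) mod M)%num).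
  by apply: map_f.
have H := loop_sound hl hk0 hw.
rewrite /stN -!iterD -/(stN M 0 1 (k0 + (m + j))) -/(stN M 2 2 (k0 + 0)) stN_P stN_Q addn0 in H.
apply: H; cbn [fst].
have eP : eqm M (N.of_nat (pell (m + k + j))) (N.of_nat (pell (k0 + (m + j)))).
  have -> : m + k + j = k %/ T * T + (k0 + (m + j)) by rewrite /k0; have := divn_eq k T; lia.
  exact: period rec_P hT h0 h1 _ _.
have eQ : eqm M (N.of_nat (pell_lucas k)) (N.of_nat (pell_lucas k0)).
  rewrite {1}(divn_eq k T) -/k0. exact: period rec_Q hT h0 h1 _ _.
apply: eqm_trans (eqm_sym eP) _.
rewrite E Nat2N.inj_add Nat2N.inj_mul nNexp.
apply: eqm_add; last by apply: eqm_modr.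
rewrite /w pellN_ok; apply: eqm_modr; apply: eqm_mul => //; apply: eqm_modr.
apply: eqm_trans hdi _.
by rewrite Nat2N.inj_add N.pow_add_r.
Qed.


Lemma lin_pos (al be X Y : Z) : (0 < 2 * al + be)%Z -> (0 < 5 * al + 2 * be)%Z ->
  (2 * Y <= X)%Z -> (2 * X <= 5 * Y)%Z -> (1 <= Y)%Z -> (0 < al * X + be * Y)%Z.
Proof.
move=> h1 h2 h3 h4 h5.
case: (Z.le_gt_cases 0 al) => ha.
  have : (0 <= al * (X - 2 * Y))%Z by apply: Z.mul_nonneg_nonneg; lia.
  have : (0 < (2 * al + be) * Y)%Z by apply: Z.mul_pos_pos; lia.
  lia.
have : (0 <= (- al) * (5 * Y - 2 * X))%Z by apply: Z.mul_nonneg_nonneg; lia.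
have : (0 < (5 * al + 2 * be) * Y)%Z by apply: Z.mul_pos_pos; lia.
lia.
Qed.

Lemma lin_nonneg (al be X Y : Z) : (0 <= 2 * al + be)%Z -> (0 <= 5 * al + 2 * be)%Z ->
  (2 * Y <= X)%Z -> (2 * X <= 5 * Y)%Z -> (1 <= Y)%Z -> (0 <= al * X + be * Y)%Z.
Proof.
move=> h1 h2 h3 h4 h5.
case: (Z.le_gt_cases 0 al) => ha.
  have : (0 <= al * (X - 2 * Y))%Z by apply: Z.mul_nonneg_nonneg; lia.
  have : (0 <= (2 * al + be) * Y)%Z by apply: Z.mul_nonneg_nonneg; lia.
  lia.
have : (0 <= (- al) * (5 * Y - 2 * X))%Z by apply: Z.mul_nonneg_nonneg; lia.
have : (0 <= (5 * al + 2 * be) * Y)%Z by apply: Z.mul_nonneg_nonneg; lia.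
lia.
Qed.

Definition zN n := Z.of_N (pellN n).

Definition winU_ok (m j b : nat) : bool :=
  let A := zN (m + j) in let B := zN (m + j).-1 in
  let c := (Z.of_nat b * zN m + 1)%Z in
  let al := (A - 2 * c)%Z in let be := (B + 2 * c)%Z in
  Z.ltb 0 (2 * al + be) && Z.ltb 0 (5 * al + 2 * be).

Definition winL_ok (m j b : nat) : bool :=
  let A := zN (m + j) in let B := zN (m + j).-1 in
  let c := (zN m + 1)%Z in
  let al := (2 * c - A)%Z in let be := (- 2 * c - B)%Z in
  Z.leb 0 (2 * al + be) && Z.leb 0 (5 * al + 2 * be).

Lemma zN_ok n : zN n = Z.of_nat (pell n).
Proof. by rewrite /zN pellN_ok nat_N_Z. Qed.

Lemma win_facts m j k : 1 <= m -> 1 <= k ->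
  pell (m + k + j) = pell (m + j) * pell k.+1 + pell (m + j).-1 * pell k /\
  pell_lucas k + 2 * pell k = 2 * pell k.+1 /\
  2 * pell k <= pell k.+1 /\ 2 * pell k.+1 <= 5 * pell k /\ 1 <= pell k.
Proof.
move=> hm hk; split.
  have -> : m + k + j = (m + j).-1.+1 + k by lia.
  rewrite (pshift rec_P) prednK //; lia.
split; first exact: QP.
split; first exact: P_mono2.
split; first exact: P_up.
exact: P_pos.
Qed.

Lemma winU_sound m j b : winU_ok m j b -> 1 <= m -> forall k x, 1 <= k ->
  x <= b * pell_lucas k -> pell (m + k + j) <> x * pell m + pell_lucas k.
Proof.
move=> /andP [/Z.ltb_lt h1 /Z.ltb_lt h2] hm k x hk hx E.
have [e1 [e2 [e3 [e4 e5]]]] := win_facts j hm hk.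
rewrite !zN_ok in h1 h2.
have := lin_pos h1 h2 (X := Z.of_nat (pell k.+1)) (Y := Z.of_nat (pell k)) ltac:(lia) ltac:(lia) ltac:(lia).
have : x * pell m <= (b * pell_lucas k) * pell m by apply: leq_mul.
nia.
Qed.

Lemma winL_sound m j b : winL_ok m j b -> 1 <= m -> forall k x, 1 <= k ->
  pell_lucas k < x -> pell (m + k + j) <> x * pell m + pell_lucas k.
Proof.
move=> /andP [/Z.leb_le h1 /Z.leb_le h2] hm k x hk hx E.
have [e1 [e2 [e3 [e4 e5]]]] := win_facts j hm hk.
rewrite !zN_ok in h1 h2.
have := lin_nonneg h1 h2 (X := Z.of_nat (pell k.+1)) (Y := Z.of_nat (pell k)) ltac:(lia) ltac:(lia) ltac:(lia).
have : (pell_lucas k).+1 * pell m <= x * pell m by apply: leq_mul.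
have := P_pos hm.
nia.
Qed.

Definition solb (b n m k : nat) : bool :=
 [|| [&& b == 3, n == 3, m == 1 & k == 0], [&& b == 3, n == 3, m == 1 & k == 1],
     [&& b == 5, n == 4, m == 2 & k == 0], [&& b == 5, n == 4, m == 2 & k == 1],
     [&& b == 10, n == 4, m == 1 & k == 0], [&& b == 10, n == 4, m == 1 & k == 1] |
     [&& b == 6, n == 6, m == 1 & k == 4]].

Definition fin_ok (m j b K D : nat) : bool :=
  all (fun k => all (fun d =>
     ~~ [&& N.leb (N.of_nat b ^ N.of_nat d.-1) (QN k), N.ltb (QN k) (N.of_nat b ^ N.of_nat d) &
            N.eqb (pellN (m + k + j)) (N.of_nat b ^ N.of_nat d * pellN m + QN k)]
     || solb b (m + k + j) m k) (iota 1 D.-1)) (iota 0 K).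

Lemma fin_sound m j b K D : fin_ok m j b K D -> forall k d, k < K -> 1 <= d < D ->
  b ^ d.-1 <= pell_lucas k -> pell_lucas k < b ^ d ->
  pell (m + k + j) = b ^ d * pell m + pell_lucas k -> solb b (m + k + j) m k.
Proof.
move=> h k d hk /andP [hd1 hd2] h1 h2 E.
have := allP h k; rewrite mem_iota => /(_ ltac:(lia)) /allP /(_ d).
rewrite mem_iota => /(_ ltac:(lia)) /orP [] // /negP []; apply/and3P; split.
- apply/N.leb_le; rewrite QN_ok -nNexp; move: h1; set e := b ^ d.-1; lia.
- apply/N.ltb_lt; rewrite QN_ok -nNexp; move: h2; set e := b ^ d; lia.
- apply/N.eqb_eq; rewrite !pellN_ok QN_ok -nNexp E; set e := b ^ d; lia.
Qed.

Inductive strat := WinU | WinL | Cong (D : nat) (M : N) (T : nat) (ord : nat).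

Definition strat_ok m j b s : bool :=
  match s with
  | WinU => winU_ok m j b && fin_ok m j b 1 3
  | WinL => winL_ok m j b && fin_ok m j b 1 3
  | Cong D M T o => [&& cong_ok m j b D M T o, N.leb (N.of_nat b ^ N.of_nat D.-1) (QN 6),
                       1 <= D & fin_ok m j b 6 D]
  end.

Lemma strat_sound m j b s : strat_ok m j b s -> 1 <= m -> 2 <= b -> forall k d, 1 <= d ->
  b ^ d.-1 <= pell_lucas k -> pell_lucas k < b ^ d ->
  pell (m + k + j) = b ^ d * pell m + pell_lucas k -> solb b (m + k + j) m k.
Proof.
move=> hs hm hb k d hd h1 h2 E.
have hbd : b ^ d = b * b ^ d.-1 by rewrite -expnS prednK.
have win0 : k = 0 -> d < 3.
  move=> hk0; rewrite hk0 in h1; change (pell_lucas 0) with 2 in h1.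
  rewrite ltnNge; apply/negP => h3.
  have : b ^ 2 <= b ^ d.-1 by apply: leq_pexp2l; [lia | rewrite -subn1; lia].
  have : 2 ^ 2 <= b ^ 2 by rewrite leq_exp2r.
  lia.
case: s hs => [| |D M T o].
- case/andP=> hw hf.
  case: (posnP k) => hk.
    have hd3 := win0 hk.
    by apply: (fin_sound hf (k:=k) (d:=d)) => //; [rewrite hk | rewrite hd hd3].
  exfalso; apply: (winU_sound hw hm hk _ E).
  rewrite hbd; apply: leq_mul => //.
- case/andP=> hw hf.
  case: (posnP k) => hk.
    have hd3 := win0 hk.
    by apply: (fin_sound hf (k:=k) (d:=d)) => //; [rewrite hk | rewrite hd hd3].
  exfalso; exact: (winL_sound hw hm hk h2 E).
- case/and4P=> hc /N.leb_le hq hD hf.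
  case: (leqP D d) => hdD.
    exfalso; exact: (cong_sound hc hdD E).
  apply: (fin_sound hf (k:=k) (d:=d)) => //; last by rewrite hd hdD.
  rewrite ltnNge; apply/negP => hk6.
  have : pell_lucas 6 <= pell_lucas k by apply: Q_mono.
  have : b ^ d <= b ^ D.-1 by apply: leq_pexp2l; lia.
  rewrite QN_ok -nNexp in hq.
  lia.
Qed.


Definition table : seq (nat*nat*nat*strat) := [::
  (1,0,2,WinL);
  (1,0,3,WinL);
  (1,0,4,WinL);
  (1,0,5,WinL);
  (1,0,6,WinL);
  (1,0,7,WinL);
  (1,0,8,WinL);
  (1,0,9,WinL);
  (1,0,10,WinL);
  (1,1,2,Cong 1 6 8 2);
  (1,1,3,Cong 3 135 72 4);
  (1,1,4,Cong 1 12 8 1);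
  (1,1,5,Cong 1 15 24 2);
  (1,1,6,Cong 3 1080 72 1);
  (1,1,7,Cong 1 21 24 1);
  (1,1,8,Cong 1 24 8 2);
  (1,1,9,Cong 1 657 72 6);
  (1,1,10,Cong 1 30 24 1);
  (1,2,2,WinU);
  (1,2,3,WinU);
  (1,2,4,Cong 2 48 16 1);
  (1,2,5,Cong 2 775 60 3);
  (1,2,6,Cong 1 6 8 1);
  (1,2,7,Cong 2 3185 84 12);
  (1,2,8,Cong 1 56 24 1);
  (1,2,9,Cong 1 45 24 2);
  (1,2,10,Cong 2 1100 120 2);
  (1,3,2,WinU);
  (1,3,3,WinU);
  (1,3,4,WinU);
  (1,3,5,WinU);
  (1,3,6,WinU);
  (1,3,7,WinU);
  (1,3,8,WinU);
  (1,3,9,WinU);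
  (1,3,10,WinU);
  (1,4,2,WinU);
  (1,4,3,WinU);
  (1,4,4,WinU);
  (1,4,5,WinU);
  (1,4,6,WinU);
  (1,4,7,WinU);
  (1,4,8,WinU);
  (1,4,9,WinU);
  (1,4,10,WinU);
  (2,0,2,WinL);
  (2,0,3,WinL);
  (2,0,4,WinL);
  (2,0,5,WinL);
  (2,0,6,WinL);
  (2,0,7,WinL);
  (2,0,8,WinL);
  (2,0,9,WinL);
  (2,0,10,WinL);
  (2,1,2,Cong 3 120 24 4);
  (2,1,3,Cong 2 45 24 4);
  (2,1,4,Cong 1 20 12 2);
  (2,1,5,Cong 2 775 60 3);
  (2,1,6,Cong 1 6 8 1);
  (2,1,7,Cong 2 3185 84 12);
  (2,1,8,Cong 1 56 24 1);
  (2,1,9,Cong 1 45 24 2);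
  (2,1,10,Cong 1 110 24 2);
  (2,2,2,WinU);
  (2,2,3,WinU);
  (2,2,4,WinU);
  (2,2,5,WinU);
  (2,2,6,Cong 1 6 8 1);
  (2,2,7,Cong 2 3185 84 12);
  (2,2,8,Cong 1 56 24 1);
  (2,2,9,Cong 1 63 24 3);
  (2,2,10,Cong 1 410 60 5);
  (2,3,2,WinU);
  (2,3,3,WinU);
  (2,3,4,WinU);
  (2,3,5,WinU);
  (2,3,6,WinU);
  (2,3,7,WinU);
  (2,3,8,WinU);
  (2,3,9,WinU);
  (2,3,10,WinU);
  (2,4,2,WinU);
  (2,4,3,WinU);
  (2,4,4,WinU);
  (2,4,5,WinU);
  (2,4,6,WinU);
  (2,4,7,WinU);
  (2,4,8,WinU);
  (2,4,9,WinU);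
  (2,4,10,WinU);
  (3,0,2,WinL);
  (3,0,3,WinL);
  (3,0,4,WinL);
  (3,0,5,WinL);
  (3,0,6,WinL);
  (3,0,7,WinL);
  (3,0,8,WinL);
  (3,0,9,WinL);
  (3,0,10,WinL);
  (3,1,2,WinU);
  (3,1,3,Cong 2 45 24 4);
  (3,1,4,Cong 2 48 16 1);
  (3,1,5,Cong 2 775 60 3);
  (3,1,6,Cong 1 6 8 1);
  (3,1,7,Cong 1 35 12 4);
  (3,1,8,Cong 1 56 24 1);
  (3,1,9,Cong 1 45 24 2);
  (3,1,10,Cong 1 110 24 2);
  (3,2,2,WinU);
  (3,2,3,WinU);
  (3,2,4,WinU);
  (3,2,5,WinU);
  (3,2,6,Cong 1 6 8 1);
  (3,2,7,Cong 1 35 12 4);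
  (3,2,8,Cong 1 40 24 4);
  (3,2,9,Cong 1 45 24 2);
  (3,2,10,Cong 1 10 12 1);
  (3,3,2,WinU);
  (3,3,3,WinU);
  (3,3,4,WinU);
  (3,3,5,WinU);
  (3,3,6,WinU);
  (3,3,7,WinU);
  (3,3,8,WinU);
  (3,3,9,WinU);
  (3,3,10,WinU);
  (3,4,2,WinU);
  (3,4,3,WinU);
  (3,4,4,WinU);
  (3,4,5,WinU);
  (3,4,6,WinU);
  (3,4,7,WinU);
  (3,4,8,WinU);
  (3,4,9,WinU);
  (3,4,10,WinU);
  (4,0,2,Cong 1 6 8 2);
  (4,0,3,Cong 1 39 56 3);
  (4,0,4,Cong 1 12 8 1);
  (4,0,5,Cong 1 155 60 3);
  (4,0,6,Cong 1 6 8 1);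
  (4,0,7,Cong 1 301 264 6);
  (4,0,8,Cong 1 24 8 2);
  (4,0,9,Cong 1 765 48 8);
  (4,0,10,Cong 1 30 24 1);
  (4,1,2,WinU);
  (4,1,3,Cong 1 39 56 3);
  (4,1,4,Cong 1 12 8 1);
  (4,1,5,Cong 1 5 12 1);
  (4,1,6,Cong 1 6 8 1);
  (4,1,7,Cong 1 21 24 1);
  (4,1,8,Cong 1 24 8 2);
  (4,1,9,Cong 1 765 48 8);
  (4,1,10,Cong 1 10 12 1);
  (4,2,2,WinU);
  (4,2,3,WinU);
  (4,2,4,WinU);
  (4,2,5,WinU);
  (4,2,6,Cong 2 36 24 1);
  (4,2,7,Cong 1 7 6 1);
  (4,2,8,Cong 1 24 8 2);
  (4,2,9,Cong 1 99 24 5);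
  (4,2,10,Cong 1 10 12 1);
  (4,3,2,WinU);
  (4,3,3,WinU);
  (4,3,4,WinU);
  (4,3,5,WinU);
  (4,3,6,WinU);
  (4,3,7,WinU);
  (4,3,8,WinU);
  (4,3,9,WinU);
  (4,3,10,WinU);
  (4,4,2,WinU);
  (4,4,3,WinU);
  (4,4,4,WinU);
  (4,4,5,WinU);
  (4,4,6,WinU);
  (4,4,7,WinU);
  (4,4,8,WinU);
  (4,4,9,WinU);
  (4,4,10,WinU);
  (5,0,2,Cong 2 68 16 8);
  (5,0,3,Cong 1 123 40 8);
  (5,0,4,Cong 2 48 16 1);
  (5,0,5,Cong 1 5 12 1);
  (5,0,6,Cong 1 6 8 1);
  (5,0,7,Cong 1 203 60 7);
  (5,0,8,Cong 1 56 24 1);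
  (5,0,9,Cong 1 45 24 2);
  (5,0,10,Cong 1 10 12 1);
  (5,1,2,WinU);
  (5,1,3,Cong 2 99 24 5);
  (5,1,4,Cong 2 48 16 1);
  (5,1,5,Cong 1 5 12 1);
  (5,1,6,Cong 1 30 24 1);
  (5,1,7,Cong 1 7 6 1);
  (5,1,8,Cong 1 56 24 1);
  (5,1,9,Cong 1 45 24 2);
  (5,1,10,Cong 1 10 12 1);
  (5,2,2,WinU);
  (5,2,3,WinU);
  (5,2,4,WinU);
  (5,2,5,WinU);
  (5,2,6,Cong 2 180 24 1);
  (5,2,7,Cong 1 399 120 3);
  (5,2,8,Cong 1 24 8 2);
  (5,2,9,Cong 1 45 24 2);
  (5,2,10,Cong 1 10 12 1);
  (5,3,2,WinU);
  (5,3,3,WinU);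
  (5,3,4,WinU);
  (5,3,5,WinU);
  (5,3,6,WinU);
  (5,3,7,WinU);
  (5,3,8,WinU);
  (5,3,9,WinU);
  (5,3,10,WinU);
  (5,4,2,WinU);
  (5,4,3,WinU);
  (5,4,4,WinU);
  (5,4,5,WinU);
  (5,4,6,WinU);
  (5,4,7,WinU);
  (5,4,8,WinU);
  (5,4,9,WinU);
  (5,4,10,WinU);
  (6,0,2,Cong 1 14 6 3);
  (6,0,3,Cong 1 15 24 4);
  (6,0,4,Cong 1 20 12 2);
  (6,0,5,Cong 1 5 12 1);
  (6,0,6,Cong 1 30 24 1);
  (6,0,7,Cong 1 7 6 1);
  (6,0,8,Cong 1 56 24 1);
  (6,0,9,Cong 1 45 24 2);
  (6,0,10,Cong 1 10 12 1);
  (6,1,2,WinU);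
  (6,1,3,Cong 1 15 24 4);
  (6,1,4,Cong 1 12 8 1);
  (6,1,5,Cong 1 5 12 1);
  (6,1,6,Cong 1 30 24 1);
  (6,1,7,Cong 1 35 12 4);
  (6,1,8,Cong 1 24 8 2);
  (6,1,9,Cong 1 45 24 2);
  (6,1,10,Cong 1 10 12 1);
  (6,2,2,WinU);
  (6,2,3,WinU);
  (6,2,4,WinU);
  (6,2,5,WinU);
  (6,2,6,Cong 1 6 8 1);
  (6,2,7,Cong 1 35 12 4);
  (6,2,8,Cong 1 40 24 4);
  (6,2,9,Cong 1 45 24 2);
  (6,2,10,Cong 1 10 12 1);
  (6,3,2,WinU);
  (6,3,3,WinU);
  (6,3,4,WinU);
  (6,3,5,WinU);
  (6,3,6,WinU);
  (6,3,7,WinU);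
  (6,3,8,WinU);
  (6,3,9,WinU);
  (6,3,10,WinU);
  (6,4,2,WinU);
  (6,4,3,WinU);
  (6,4,4,WinU);
  (6,4,5,WinU);
  (6,4,6,WinU);
  (6,4,7,WinU);
  (6,4,8,WinU);
  (6,4,9,WinU);
  (6,4,10,WinU);
  (7,0,2,Cong 2 12 8 2);
  (7,0,3,Cong 1 105 24 12);
  (7,0,4,Cong 1 12 8 1);
  (7,0,5,Cong 1 5 12 1);
  (7,0,6,Cong 2 180 24 1);
  (7,0,7,Cong 1 203 60 7);
  (7,0,8,Cong 1 24 8 2);
  (7,0,9,Cong 1 45 24 2);
  (7,0,10,Cong 1 10 12 1);
  (7,1,2,WinU);
  (7,1,3,Cong 1 39 56 3);
  (7,1,4,Cong 1 52 28 6);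
  (7,1,5,Cong 1 5 12 1);
  (7,1,6,Cong 1 6 8 1);
  (7,1,7,Cong 1 91 84 12);
  (7,1,8,Cong 1 584 72 3);
  (7,1,9,Cong 1 63 24 3);
  (7,1,10,Cong 1 10 12 1);
  (7,2,2,WinU);
  (7,2,3,WinU);
  (7,2,4,WinU);
  (7,2,5,WinU);
  (7,2,6,Cong 2 180 24 1);
  (7,2,7,Cong 1 399 120 3);
  (7,2,8,Cong 1 24 8 2);
  (7,2,9,Cong 1 63 24 3);
  (7,2,10,Cong 1 330 24 2);
  (7,3,2,WinU);
  (7,3,3,WinU);
  (7,3,4,WinU);
  (7,3,5,WinU);
  (7,3,6,WinU);
  (7,3,7,WinU);
  (7,3,8,WinU);
  (7,3,9,WinU);
  (7,3,10,WinU);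
  (7,4,2,WinU);
  (7,4,3,WinU);
  (7,4,4,WinU);
  (7,4,5,WinU);
  (7,4,6,WinU);
  (7,4,7,WinU);
  (7,4,8,WinU);
  (7,4,9,WinU);
  (7,4,10,WinU)].

Definition table_ok := all (fun '(m,j,b,s) => strat_ok m j b s) table.
Definition covered := all (fun m => all (fun j => all (fun b =>
   has (fun '(m',j',b',_) => [&& m' == m, j' == j & b' == b]) table) (iota 2 9)) (iota 0 5)) (iota 1 7).

Lemma has_ex (T : Type) (p : pred T) (s : seq T) : has p s -> exists2 x, List.In x s & p x.
Proof. elim: s => [|x s IH] //= /orP [h|/IH [y hy hp]]; [exists x; auto | exists y; auto]. Qed.
Lemma all_in (T : Type) (p : pred T) (s : seq T) x : all p s -> List.In x s -> p x.
Proof. elim: s => [|y s IH] //= /andP [h1 h2] [<-|hx] //; exact: IH. Qed.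

Lemma table_okT : table_ok. Proof. by vm_compute. Qed.
Lemma coveredT : covered. Proof. by vm_compute. Qed.

Lemma partIII m j b k d : 1 <= m <= 7 -> j <= 4 -> 2 <= b <= 10 -> 1 <= d ->
  b ^ d.-1 <= pell_lucas k -> pell_lucas k < b ^ d ->
  pell (m + k + j) = b ^ d * pell m + pell_lucas k -> solb b (m + k + j) m k.
Proof.
move=> /andP [hm1 hm7] hj /andP [hb2 hb10] hd h1 h2 E.
have := allP coveredT m; rewrite mem_iota => /(_ ltac:(lia)) /allP /(_ j).
rewrite mem_iota => /(_ ltac:(lia)) /allP /(_ b).
rewrite mem_iota => /(_ ltac:(lia)) H.
have [[[[m' j'] b'] s] hin H'] := has_ex H.
move: H' => /and3P [/eqP e1 /eqP e2 /eqP e3].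
subst m' j' b'.
have hs := all_in table_okT hin.
exact: (strat_sound hs hm1 hb2 hd h1 h2 E).
Qed.

Theorem theorem3 (b n m k : nat) :
  2 <= b <= 10 -> 1 <= m ->
  (pell n = b ^ ndigits b (pell_lucas k) * pell m + pell_lucas k <->
     (b = 3 /\ n = 3 /\ m = 1 /\ k = 0) \/
     (b = 3 /\ n = 3 /\ m = 1 /\ k = 1) \/
     (b = 5 /\ n = 4 /\ m = 2 /\ k = 0) \/
     (b = 5 /\ n = 4 /\ m = 2 /\ k = 1) \/
     (b = 10 /\ n = 4 /\ m = 1 /\ k = 0) \/
     (b = 10 /\ n = 4 /\ m = 1 /\ k = 1) \/
     (b = 6 /\ n = 6 /\ m = 1 /\ k = 4)).
Proof.
move=> /andP [hb2 hb10] hm; split.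
- move=> E.
  set d := ndigits b (pell_lucas k) in E.
  have hQ := Q_pos k.
  have h1 : b ^ d.-1 <= pell_lucas k by rewrite /d /ndigits /=; apply: trunc_logP.
  have h2 : pell_lucas k < b ^ d by rewrite /d /ndigits; apply: trunc_log_ltn.
  have hd : 1 <= d by [].
  have hbd : b ^ d = b * b ^ d.-1 by rewrite -expnS prednK.
  have hx : b ^ d <= 10 * pell_lucas k.
    rewrite hbd; apply: leq_mul => //.
  have /andP [hn1 hn2] := partI hm h2 hx E.
  set j := n - (m + k).
  have hn : n = m + k + j by rewrite /j; lia.
  have hm7 : m <= 7.
    rewrite leqNgt; apply/negP => hm8.
    have [i hi] : exists i, m = i.+2 by exists (m - 2); lia.
    apply: (partII (i := i) (j := j) (k := k)); first lia; first (rewrite /j; lia).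
    rewrite -hi -hn.
    exists (Z.of_nat (b ^ d)).
    rewrite /zP /zQ E; lia.
  have := partIII (m := m) (j := j) (b := b) (k := k) (d := d).
  rewrite -hn => /(_ ltac:(lia) ltac:(rewrite /j; lia) ltac:(lia) hd h1 h2 E).
  rewrite /solb.
  case/orP=> [/and4P [/eqP -> /eqP -> /eqP -> /eqP ->]|]; first by tauto.
  case/orP=> [/and4P [/eqP -> /eqP -> /eqP -> /eqP ->]|]; first by tauto.
  case/orP=> [/and4P [/eqP -> /eqP -> /eqP -> /eqP ->]|]; first by tauto.
  case/orP=> [/and4P [/eqP -> /eqP -> /eqP -> /eqP ->]|]; first by tauto.
  case/orP=> [/and4P [/eqP -> /eqP -> /eqP -> /eqP ->]|]; first by tauto.
  case/orP=> [/and4P [/eqP -> /eqP -> /eqP -> /eqP ->]|]; first by tauto.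
  case/and4P=> [/eqP -> /eqP -> /eqP -> /eqP ->]; by tauto.
- by case=> [|[|[|[|[|[|]]]]]] [-> [-> [-> ->]]]; vm_compute.
Qed.
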